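(* Let $p,q,r,s\in\mathbb{C}$ with $r\neq s^2$, $q\neq s^3$, or $p\neq s^4$, and let $\delta$ be the rational space quartic in $\mathbb{C}\mathbb{P}^3$ parametrised by $t\mapsto[t^4-p,\,t^3+q,\,t^2-r,\,t+s]$, and suppose $\delta$ is of the first species. Identify $\mathbb{C}\mathbb{P}^1$ with $\mathbb{C}\cup\{\infty\}$. If $\delta$ is nodal, then there exists a parametrisation $\varphi:\mathbb{C}\mathbb{P}^1\to\delta$ such that $\varphi(0)=\varphi(\infty)$ is the node of $\delta$, and any four points $\varphi(t_1),\varphi(t_2),\varphi(t_3),\varphi(t_4)$ on $\delta\setminus\{\varphi(0)\}$ are coplanar if and only if $t_1t_2t_3t_4=1$. If $\delta$ is cuspidal, then there exists a parametrisation $\varphi:\mathbb{C}\mathbb{P}^1\to\delta$ such that $\varphi(\infty)$ is the cusp of $\delta$, and any four points $\varphi(t_1),\varphi(t_2),\varphi(t_3),\varphi(t_4)$ on $\delta\setminus\{\varphi(\infty)\}$ are coplanar if and only if $t_1+t_2+t_3+t_4=0$.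
   Context: A space quartic is an irreducible non-planar curve of degree $4$ in $\mathbb{C}\mathbb{P}^3$; it is of the first species if it is contained in more than one quadric surface. A rational space quartic of the first species has exactly one singular point, which is either a node or a cusp. *)

(* Defs.v *)
From mathcomp Require Import all_boot all_algebra.
From mathcomp Require Import reals complex.
Set Implicit Arguments. Unset Strict Implicit. Unset Printing Implicit Defensive.
Import GRing.Theory Num.Theory.
Local Open Scope ring_scope.

Section ProjectiveCurves.
Variable C : fieldType.

(** Points of P^3 are represented by nonzero row vectors of C^4;
    two representatives give the same point iff they are proportional. *)
Definition proj_eq (u v : 'rV[C]_4) : Prop :=
  v != 0 /\ exists c : C, c != 0 /\ u = c *: v.

(** A morphism  P^1 -> P^3  of degree d, given by four binary forms of degree d,
    encoded by their dehomogenisations  f i  (polynomials of size <= d+1).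
    P^1 is identified with  C u {oo}:  Some t  is  t  and  None  is  oo. *)
Definition pt (f : 'I_4 -> {poly C}) (d : nat) (t : option C) : 'rV[C]_4 :=
  match t with
  | Some x => \row_i (f i).[x]
  | None => \row_i (f i)`_d
  end.

(** velocity vector of a lift of the map in a local affine chart of P^1
    (chart t at finite points, chart u = 1/t at oo). *)
Definition dpt (f : 'I_4 -> {poly C}) (d : nat) (t : option C) : 'rV[C]_4 :=
  match t with
  | Some x => \row_i ((f i)^`()).[x]
  | None => \row_i (f i)`_d.-1
  end.

Definition wf_map (f : 'I_4 -> {poly C}) (d : nat) : Prop :=
  (forall i, (size (f i) <= d.+1)%N) /\ (forall t, pt f d t != 0).

Definition curve (f : 'I_4 -> {poly C}) (d : nat) (v : 'rV[C]_4) : Prop :=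
  exists t, proj_eq v (pt f d t).

Definition immersive (f : 'I_4 -> {poly C}) (d : nat) (t : option C) : Prop :=
  \rank (col_mx (pt f d t) (dpt f d t)) = 2%N.

(** g of degree e is a parametrisation of the image curve of (f,d):
    a morphism P^1 -> P^3 onto that curve, which is birational onto its image
    (injective away from finitely many parameters). *)
Definition parametrisation (g : 'I_4 -> {poly C}) (e : nat)
    (f : 'I_4 -> {poly C}) (d : nat) : Prop :=
  wf_map g e /\ (forall v, curve g e v <-> curve f d v) /\
  exists S : seq (option C), forall t u, t \notin S -> u \notin S ->
    proj_eq (pt g e t) (pt g e u) -> t = u.

(** Singular points / nodes / cusps of the image of a birational
    parametrisation (f,d), read off the normalisation P^1 -> curve. *)
Definition singular_pt (f : 'I_4 -> {poly C}) (d : nat) (v : 'rV[C]_4) : Prop :=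
  (exists t u, t <> u /\ proj_eq v (pt f d t) /\ proj_eq v (pt f d u)) \/
  (exists t, proj_eq v (pt f d t) /\ ~ immersive f d t).

(** node: exactly two branches, both smooth, with distinct tangent lines *)
Definition is_node (f : 'I_4 -> {poly C}) (d : nat) (v : 'rV[C]_4) : Prop :=
  exists t u, t <> u /\ proj_eq v (pt f d t) /\ proj_eq v (pt f d u) /\
    (forall w, proj_eq v (pt f d w) -> w = t \/ w = u) /\
    immersive f d t /\ immersive f d u /\
    \rank (col_mx (col_mx (pt f d t) (dpt f d t))
                  (col_mx (pt f d u) (dpt f d u))) = 3%N.

Definition is_cusp (f : 'I_4 -> {poly C}) (d : nat) (v : 'rV[C]_4) : Prop :=
  exists t, proj_eq v (pt f d t) /\
    (forall w, proj_eq v (pt f d w) -> w = t) /\ ~ immersive f d t.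

(** quadric surfaces: nonzero symmetric 4x4 matrices up to scaling *)
Definition on_quadric (A : 'M[C]_4) (v : 'rV[C]_4) : Prop :=
  v *m A *m v^T = 0.

Definition first_species (X : 'rV[C]_4 -> Prop) : Prop :=
  exists A B : 'M[C]_4,
    [/\ A^T = A, B^T = B, A != 0, B != 0 &
      [/\ ~ (exists c : C, A = c *: B),
          (forall v, X v -> on_quadric A v) &
          (forall v, X v -> on_quadric B v)]].

Definition coplanar (x : 'I_4 -> 'rV[C]_4) : Prop :=
  exists a : 'rV[C]_4, a != 0 /\ forall i, x i *m a^T = 0.

Definition psi (p q r s : C) : 'I_4 -> {poly C} := fun i =>
  match val i with
  | 0%N => 'X^4 - p%:P
  | 1%N => 'X^3 + q%:P
  | 2%N => 'X^2 - r%:P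
  | _ => 'X + s%:P
  end.

End ProjectiveCurves.

(* Main.v *)
Require Import Defs.
From mathcomp Require Import all_boot all_algebra.
From mathcomp Require Import reals complex.
From mathcomp Require Import ring.
Import GRing.Theory Num.Theory.
Local Open Scope ring_scope.

Module Aux.
Set Implicit Arguments. Unset Strict Implicit. Unset Printing Implicit Defensive.

Section Gen.
Variable C : numClosedFieldType.
Implicit Types f q P Q : {poly C}.

Lemma horner5 f x : (size f <= 5)%N ->
  f.[x] = f`_0 + f`_1 * x + f`_2 * x^+2 + f`_3 * x^+3 + f`_4 * x^+4.
Proof.
move=> H; rewrite (horner_coef_wide _ H) !big_ord_recl big_ord0 /=.
by rewrite /bump /= ?addn0 ?add1n expr0 expr1 mulr1 addr0 !addrA.
Qed.

Lemma horner2 f x : (size f <= 2)%N -> f.[x] = f`_0 + f`_1 * x.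
Proof.
move=> H; rewrite (horner_coef_wide _ H) !big_ord_recl big_ord0 /=.
by rewrite /bump /= ?addn0 ?add1n expr0 expr1 mulr1 addr0.
Qed.

Lemma hornerD5 f x : (size f <= 5)%N ->
  (f^`()).[x] = f`_1 + 2 * f`_2 * x + 3 * f`_3 * x^+2 + 4 * f`_4 * x^+3.
Proof.
move=> H; have H' : (size f^`() <= 5)%N.
  have [->|/lt_size_deriv h] := eqVneq f 0; first by rewrite deriv0 size_poly0.
  exact: leq_trans (ltnW h) H.
rewrite (horner5 _ H') !coef_deriv.
have -> : f`_5 = 0 by apply: nth_default.
ring.
Qed.

Definition lin a b : {poly C} := a *: 'X + b%:P.

Lemma coef_lin_mul a b q i :
  (lin a b * q)`_i = (if i is j.+1 then a * q`_j else 0) + b * q`_i.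
Proof. rewrite /lin mulrDl -scalerAl coefD coefZ coefXM coefCM; case: i => //= *; ring. Qed.

Lemma horner_lin a b x : (lin a b).[x] = a * x + b.
Proof. by rewrite /lin !hornerE. Qed.

Definition E f (x y : C) := f`_0 * y^+4 + f`_1 * x * y^+3 + f`_2 * x^+2 * y^+2
  + f`_3 * x^+3 * y + f`_4 * x^+4.

Definition G (a b c d : C) f : {poly C} :=
  f`_0 *: (lin c d)^+4 + f`_1 *: ((lin a b)^+1 * (lin c d)^+3)
  + f`_2 *: ((lin a b)^+2 * (lin c d)^+2) + f`_3 *: ((lin a b)^+3 * (lin c d)^+1)
  + f`_4 *: (lin a b)^+4.

Lemma G_horner a b c d f x : (G a b c d f).[x] = E f (a*x+b) (c*x+d).
Proof. rewrite /G /E /lin !(hornerD, hornerZ, hornerM, horner_exp, hornerX, hornerC). ring. Qed.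

Lemma G_coef a b c d f i : (G a b c d f)`_i =
  f`_0 * ((lin c d)^+4)`_i + f`_1 * ((lin a b)^+1 * (lin c d)^+3)`_i
  + f`_2 * ((lin a b)^+2 * (lin c d)^+2)`_i + f`_3 * ((lin a b)^+3 * (lin c d)^+1)`_i
  + f`_4 * ((lin a b)^+4)`_i.
Proof. by rewrite /G !coefD !coefZ. Qed.

Lemma G_coef4 a b c d f : (G a b c d f)`_4 = E f a c.
Proof.
rewrite G_coef /E !exprS !expr0 -!mulrA ?mul1r !coef_lin_mul !coef1 /=. ring.
Qed.

Lemma G_coef3 a b c d f : (G a b c d f)`_3 =
  f`_0 * (4 * c^+3 * d) + f`_1 * (b * c^+3 + 3 * a * c^+2 * d)
  + f`_2 * (2 * a * b * c^+2 + 2 * a^+2 * c * d) + f`_3 * (3 * a^+2 * b * c + a^+3 * d)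
  + f`_4 * (4 * a^+3 * b).
Proof.
rewrite G_coef !exprS !expr0 -!mulrA ?mul1r !coef_lin_mul !coef1 /=. ring.
Qed.

Lemma G_size a b c d f : (size (G a b c d f) <= 5)%N.
Proof.
apply/leq_sizeP => j Hj.
have [k ->] : exists k, j = (k + 5)%N by exists (j - 5)%N; rewrite subnK.
rewrite G_coef !exprS !expr0 -!mulrA ?mul1r !addnS addn0 !coef_lin_mul !coef1 /=.
ring.
Qed.

End Gen.


Section PB.
Variable C : numClosedFieldType.
Implicit Types (f g : 'I_4 -> {poly C}) (w : C * C) (o : option C).

Definition pr o : C * C := if o is Some x then (x, 1) else (1, 0).
Definition unpr w : option C := if w.2 == 0 then None else Some (w.1 / w.2).
Definition sc (l : C) w := (l * w.1, l * w.2).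
Definition nzp w := (w.1 != 0) || (w.2 != 0).
Definition Erow f w : 'rV[C]_4 := \row_i E (f i) w.1 w.2.
Definition sized f := forall i, (size (f i) <= 5)%N.

Lemma E_hom (h : {poly C}) l x y : E h (l*x) (l*y) = l^+4 * E h x y.
Proof. rewrite /E; ring. Qed.

Lemma Erow_sc f l w : Erow f (sc l w) = l^+4 *: Erow f w.
Proof. by apply/rowP => i; rewrite !mxE E_hom. Qed.

Lemma pt_Erow f o : sized f -> pt f 4 o = Erow f (pr o).
Proof.
move=> Hf; case: o => [x|] /=; apply/rowP => i; rewrite !mxE /E /=.
  rewrite horner5 //; ring.
ring.
Qed.

Lemma pr_nz o : nzp (pr o).
Proof. by case: o => [x|]; rewrite /nzp /= oner_neq0 ?orbT. Qed.

Lemma unpr_pr o : unpr (pr o) = o.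
Proof. by case: o => [x|]; rewrite /unpr /= ?oner_eq0 ?eqxx ?divr1. Qed.

Lemma unpr_sc l w : l != 0 -> unpr (sc l w) = unpr w.
Proof.
case: w => x y Hl; rewrite /unpr /sc /= mulf_eq0 (negbTE Hl) /=.
case: (eqVneq y 0) => // Hy; congr Some; field; by rewrite Hy.
Qed.

Lemma pr_unpr w : nzp w -> exists l, l != 0 /\ pr (unpr w) = sc l w.
Proof.
case: w => x y; rewrite /nzp /unpr /sc /=.
case: (eqVneq y 0) => [->|Hy] /=.
  rewrite orbF => Hx; exists x^-1; split; first by rewrite invr_eq0.
  by rewrite mulVf // mulr0.
move=> _; exists y^-1; split; first by rewrite invr_eq0.
by rewrite mulVf // mulrC.
Qed.

Lemma Erow_unpr f w : sized f -> nzp w ->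
  exists k, k != 0 /\ Erow f w = k *: pt f 4 (unpr w).
Proof.
move=> Hf Hw; have [l [Hl Hp]] := pr_unpr Hw.
exists ((l^-1)^+4); split; first by rewrite expf_eq0 invr_eq0 (negbTE Hl) andbF.
rewrite pt_Erow // Hp Erow_sc scalerA -exprMn mulVf // expr1n scale1r //.
Qed.

Definition mob (a b c d : C) w := (a * w.1 + b * w.2, c * w.1 + d * w.2).

Lemma mob_sc a b c d l w : mob a b c d (sc l w) = sc l (mob a b c d w).
Proof. rewrite /mob /sc /=; congr (_, _); ring. Qed.

Section Mob.
Variables a b c d : C.
Hypothesis Dnz : a * d - b * c != 0.
Let D := a * d - b * c.
Definition mobi := mob (d / D) (- b / D) (- c / D) (a / D).

Lemma mobK w : mobi (mob a b c d w) = w.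
Proof. case: w => x y; rewrite /mobi /mob /D /=; congr (_, _); field; exact: Dnz. Qed.

Lemma mobKi w : mob a b c d (mobi w) = w.
Proof. case: w => x y; rewrite /mobi /mob /D /=; congr (_, _); field; exact: Dnz. Qed.

Lemma mob_nz w : nzp w -> nzp (mob a b c d w).
Proof.
move=> Hw; apply/negPn/negP; rewrite /nzp negb_or !negbK => /andP[/eqP h1 /eqP h2].
move: Hw; rewrite -(mobK w); move: h1 h2; case: (mob a b c d w) => m1 m2 /= -> ->.
by rewrite /mobi /mob /nzp /= !mulr0 !addr0 eqxx.
Qed.

Definition mm o := unpr (mob a b c d (pr o)).
Definition mmi o := unpr (mobi (pr o)).

Lemma mmK : cancel mm mmi.
Proof.
move=> o; rewrite /mm /mmi.
have [l [Hl ->]] := pr_unpr (mob_nz (pr_nz o)).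
by rewrite /mobi mob_sc unpr_sc // -/(mobi _) mobK unpr_pr.
Qed.

Lemma mmKi : cancel mmi mm.
Proof.
move=> o; rewrite /mm /mmi.
have Hn : nzp (mobi (pr o)).
  apply/negPn/negP; rewrite /nzp negb_or !negbK => /andP[/eqP h1 /eqP h2].
  have := pr_nz o; rewrite -(mobKi (pr o)); move: h1 h2.
  case: (mobi (pr o)) => m1 m2 /= -> ->.
  by rewrite /mob /nzp /= !mulr0 !addr0 eqxx.
have [l [Hl ->]] := pr_unpr Hn.
by rewrite mob_sc unpr_sc // mobKi unpr_pr.
Qed.

End Mob.

Lemma pe_scr (u v : 'rV[C]_4) k : proj_eq u v -> k != 0 -> proj_eq u (k *: v).
Proof.
move=> [Hv [c [Hc ->]]] Hk; split; first by rewrite scaler_eq0 negb_or Hk.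
exists (c / k); split; first by rewrite mulf_neq0 // invr_eq0.
by rewrite scalerA mulfVK.
Qed.

Lemma pe_scr_inv (u v : 'rV[C]_4) k : proj_eq u (k *: v) -> k != 0 -> proj_eq u v.
Proof.
move=> H Hk; have := pe_scr H (invr_neq0 Hk).
by rewrite scalerA mulVf // scale1r.
Qed.

Lemma pe_scl (u v : 'rV[C]_4) k : proj_eq u v -> k != 0 -> proj_eq (k *: u) v.
Proof.
move=> [Hv [c [Hc ->]]] Hk; split => //.
by exists (k * c); split; [rewrite mulf_neq0 | rewrite scalerA].
Qed.

Lemma pe_scl_inv (u v : 'rV[C]_4) k : proj_eq (k *: u) v -> k != 0 -> proj_eq u v.
Proof.
move=> H Hk; have := pe_scl H (invr_neq0 Hk).
by rewrite scalerA mulVf // scale1r.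
Qed.

Lemma pe_refl (u : 'rV[C]_4) : u != 0 -> proj_eq u u.
Proof. by move=> Hu; split => //; exists 1; rewrite oner_neq0 scale1r. Qed.

Definition birat f := exists S : seq (option C), forall t u, t \notin S -> u \notin S ->
    proj_eq (pt f 4 t) (pt f 4 u) -> t = u.

Lemma transfer f g (m mi : option C -> option C) :
  wf_map f 4 -> birat f -> sized g -> cancel m mi -> cancel mi m ->
  (forall o, exists k, k != 0 /\ pt g 4 o = k *: pt f 4 (m o)) ->
  parametrisation g 4 f 4.
Proof.
move=> [_ Hf0] [S HS] Hg Hm Hmi Hk.
split; [split => // o|split].
- by have [k [Hk0 ->]] := Hk o; rewrite scaler_eq0 negb_or Hk0 Hf0.
- move=> v; split.
    move=> [o Ho]; exists (m o); have [k [Hk0 Ho']] := Hk o.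
    by rewrite Ho' in Ho; exact: pe_scr_inv Ho Hk0.
  move=> [o Ho]; exists (mi o); have [k [Hk0 Ho']] := Hk (mi o).
  by rewrite Ho' Hmi; exact: pe_scr Ho Hk0.
- exists (map mi S) => t u Ht Hu Htu.
  have Hn : forall x, x \notin map mi S -> m x \notin S.
    move=> x Hx; apply/negP => Hin; move/negP: Hx; apply.
    by rewrite -{1}(Hm x); apply: map_f.
  apply: (can_inj Hm); apply: HS; try exact: Hn.
  have [k1 [Hk1 E1]] := Hk t; have [k2 [Hk2 E2]] := Hk u.
  rewrite E1 E2 in Htu; apply: pe_scl_inv (pe_scr_inv Htu Hk2) Hk1.
Qed.

End PB.


Definition i0 : 'I_4 := @Ordinal 4 0 isT.
Definition i1 : 'I_4 := @Ordinal 4 1 isT.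
Definition i2 : 'I_4 := @Ordinal 4 2 isT.
Definition i3 : 'I_4 := @Ordinal 4 3 isT.

Lemma ord4_ind (P : 'I_4 -> Prop) : P i0 -> P i1 -> P i2 -> P i3 -> forall i, P i.
Proof.
move=> H0 H1 H2 H3 [[|[|[|[|k]]]] Hi] //.
- by have -> : Ordinal Hi = i0 by apply: val_inj.
- by have -> : Ordinal Hi = i1 by apply: val_inj.
- by have -> : Ordinal Hi = i2 by apply: val_inj.
- by have -> : Ordinal Hi = i3 by apply: val_inj.
Qed.

Section PC.
Variable C : numClosedFieldType.

Lemma sum4 (F : 'I_4 -> C) : \sum_(j < 4) F j = F i0 + F i1 + F i2 + F i3.
Proof.
rewrite !big_ord_recl big_ord0 addr0 !addrA.
by congr (_ + _ + _ + _); congr F; apply: val_inj.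
Qed.

Lemma prod4 (F : 'I_4 -> C) : \prod_(j < 4) F j = F i0 * F i1 * F i2 * F i3.
Proof.
rewrite !big_ord_recl big_ord0 mulr1 !mulrA.
by congr (_ * _ * _ * _); congr F; apply: val_inj.
Qed.

Definition dot (u a : 'rV[C]_4) := \sum_j u 0 j * a 0 j.

Lemma dotE (u a : 'rV[C]_4) : (u *m a^T = 0) <-> dot u a = 0.
Proof.
split.
  move/matrixP => /(_ 0 0); rewrite !mxE => H; rewrite /dot -[RHS]H.
  by apply: eq_bigr => j _; rewrite !mxE.
move=> H; apply/matrixP => i j; rewrite !ord1 !mxE -[RHS]H.
by apply: eq_bigr => k _; rewrite !mxE.
Qed.

Variables p q r s : C.
Notation ps := (psi p q r s).

Lemma ps0 : ps i0 = 'X^4 - p%:P. Proof. by []. Qed.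
Lemma ps1 : ps i1 = 'X^3 + q%:P. Proof. by []. Qed.
Lemma ps2 : ps i2 = 'X^2 - r%:P. Proof. by []. Qed.
Lemma ps3 : ps i3 = 'X + s%:P. Proof. by []. Qed.

Lemma psi_sized : sized ps.
Proof.
apply: ord4_ind; apply/leq_sizeP => j Hj;
have [k ->] : exists k, j = (k + 5)%N by exists (j - 5)%N; rewrite subnK.
all: rewrite ?ps0 ?ps1 ?ps2 ?ps3 !(coefB, coefD, coefXn, coefX, coefC) !addnS addn0 /=.
all: by rewrite ?subr0 ?addr0.
Qed.

Lemma pt_some x : pt ps 4 (Some x) = \row_i (ps i).[x].
Proof. by []. Qed.

Lemma ev_some x (i : 'I_4) : pt ps 4 (Some x) 0 i = (ps i).[x].
Proof. by rewrite !mxE. Qed.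

Lemma ev0 x : (ps i0).[x] = x^+4 - p.
Proof. by rewrite ps0 !(hornerD, hornerN, hornerXn, hornerC). Qed.
Lemma ev1 x : (ps i1).[x] = x^+3 + q.
Proof. by rewrite ps1 !(hornerD, hornerN, hornerXn, hornerC). Qed.
Lemma ev2 x : (ps i2).[x] = x^+2 - r.
Proof. by rewrite ps2 !(hornerD, hornerN, hornerXn, hornerC). Qed.
Lemma ev3 x : (ps i3).[x] = x + s.
Proof. by rewrite ps3 !(hornerD, hornerN, hornerX, hornerC). Qed.

Lemma ptN (i : 'I_4) : pt ps 4 None 0 i = (ps i)`_4.
Proof. by rewrite !mxE. Qed.

Lemma cf4_0 : (ps i0)`_4 = 1.
Proof. by rewrite ps0 !(coefB, coefXn, coefC) /= subr0. Qed.
Lemma cf4_1 : (ps i1)`_4 = 0.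
Proof. by rewrite ps1 !(coefD, coefXn, coefC) /= addr0. Qed.
Lemma cf4_2 : (ps i2)`_4 = 0.
Proof. by rewrite ps2 !(coefB, coefXn, coefC) /= subr0. Qed.
Lemma cf4_3 : (ps i3)`_4 = 0.
Proof. by rewrite ps3 !(coefD, coefX, coefC) /= addr0. Qed.
Lemma cf3_0 : (ps i0)`_3 = 0.
Proof. by rewrite ps0 !(coefB, coefXn, coefC) /= subr0. Qed.
Lemma cf3_1 : (ps i1)`_3 = 1.
Proof. by rewrite ps1 !(coefD, coefXn, coefC) /= addr0. Qed.
Lemma cf3_2 : (ps i2)`_3 = 0.
Proof. by rewrite ps2 !(coefB, coefXn, coefC) /= subr0. Qed.
Lemma cf3_3 : (ps i3)`_3 = 0.
Proof. by rewrite ps3 !(coefD, coefX, coefC) /= addr0. Qed.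

Lemma row_nz (u : 'rV[C]_4) (i : 'I_4) : u 0 i != 0 -> u != 0.
Proof. by move=> H; apply/negP => /eqP Hu; move: H; rewrite Hu mxE eqxx. Qed.

Hypothesis Hpqrs : r != s ^+ 2 \/ q != s ^+ 3 \/ p != s ^+ 4.

Lemma psi_wf : wf_map ps 4.
Proof.
split; first exact: psi_sized.
case=> [x|]; last by apply: (@row_nz _ i0); rewrite ptN cf4_0 oner_neq0.
case: (eqVneq (x + s) 0) => Hx; last by apply: (@row_nz _ i3); rewrite ev_some ev3.
have -> : x = - s by apply/eqP; rewrite -subr_eq0 opprK Hx.
case: Hpqrs => [H|[H|H]].
- apply: (@row_nz _ i2); rewrite ev_some ev2.
  have -> : (-s)^+2 - r = s^+2 - r by ring.
  by rewrite subr_eq0 eq_sym.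
- apply: (@row_nz _ i1); rewrite ev_some ev1.
  have -> : (-s)^+3 + q = q - s^+3 by ring.
  by rewrite subr_eq0.
- apply: (@row_nz _ i0); rewrite ev_some ev0.
  have -> : (-s)^+4 - p = s^+4 - p by ring.
  by rewrite subr_eq0 eq_sym.
Qed.

Lemma pe_entries x y : proj_eq (pt ps 4 (Some x)) (pt ps 4 (Some y)) ->
  exists c, c != 0 /\ [/\ x^+4 - p = c * (y^+4 - p), x^+3 + q = c * (y^+3 + q),
    x^+2 - r = c * (y^+2 - r) & x + s = c * (y + s)].
Proof.
move=> [_ [c [Hc He]]]; exists c; split => //.
have Hi : forall i, (ps i).[x] = c * (ps i).[y].
  by move=> i; move/matrixP: He => /(_ 0 i); rewrite !mxE.
by split; [move: (Hi i0) | move: (Hi i1) | move: (Hi i2) | move: (Hi i3)];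
  rewrite ?ev0 ?ev1 ?ev2 ?ev3.
Qed.

Lemma two_nz : (2 : C) != 0.
Proof. by rewrite pnatr_eq0. Qed.

Definition sig0 := (q - s * r) / (s^+2 - r).
Definition pi0 := - r - s * sig0.
Definition z0 := (sig0 + sqrtC (sig0^+2 - 4 * pi0)) / 2.

Lemma four_nz : (4 : C) != 0.
Proof. by rewrite pnatr_eq0. Qed.

Lemma z0_root : z0^+2 - sig0 * z0 + pi0 = 0.
Proof.
have Hs := sqrtCK (sig0^+2 - 4 * pi0).
rewrite /z0; set w := sqrtC _ in Hs *.
have H2 := two_nz; have H4 := four_nz.
have -> : ((sig0 + w) / 2) ^+ 2 - sig0 * ((sig0 + w) / 2) + pi0 = (w^+2 - (sig0 ^+ 2 - 4 * pi0)) / 4.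
  by field.
by rewrite Hs subrr mul0r.
Qed.

Definition Spsi : seq (option C) := [:: None; Some (- s); Some z0; Some (sig0 - z0)].

Lemma psi_birat : birat ps.
Proof.
exists Spsi => t u Ht Hu Htu.
case: t Ht Htu => [x|]; last by rewrite in_cons eqxx.
case: u Hu => [y|]; last by rewrite in_cons eqxx.
rewrite !inE /= !(inj_eq (@Some_inj _)) => Hy Hx /pe_entries [c [Hc [e0 e1 e2 e3]]].
move: Hx Hy; rewrite !negb_or => /and3P[Hxs Hxz Hxz'] /and3P[Hys _ _].
congr Some.
case: (eqVneq x y) => [->//|Hxy].
have Hxy' : x - y != 0 by rewrite subr_eq0.
have Eq1 : x * y + s * (x + y) + r = 0.
  have : (x - y) * (x * y + s * (x + y) + r) = (x^+2 - r) * (y + s) - (y^+2 - r) * (x + s)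
    by ring.
  rewrite e2 e3 -/(_ * _) => H.
  have : (x - y) * (x * y + s * (x + y) + r) = 0 by rewrite H; ring.
  by move/eqP; rewrite mulf_eq0 (negbTE Hxy') /= => /eqP.
have Eq2 : x * y * (x + y) + s * (x^+2 + x * y + y^+2) - q = 0.
  have : (x - y) * (x * y * (x + y) + s * (x^+2 + x * y + y^+2) - q)
     = (x^+3 + q) * (y + s) - (y^+3 + q) * (x + s) by ring.
  rewrite e1 e3 => H.
  have : (x - y) * (x * y * (x + y) + s * (x^+2 + x * y + y^+2) - q) = 0 by rewrite H; ring.
  by move/eqP; rewrite mulf_eq0 (negbTE Hxy') /= => /eqP.
have Eq3 : (x + y) * (s^+2 - r) = q - s * r.
  apply/eqP; rewrite -subr_eq0; apply/eqP.
  have -> : (x + y) * (s^+2 - r) - (q - s * r) =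
    (x * y * (x + y) + s * (x^+2 + x * y + y^+2) - q)
    - (x + y) * (x * y + s * (x + y) + r) + s * (x * y + s * (x + y) + r) by ring.
  by rewrite Eq1 Eq2; ring.
case: (eqVneq (s^+2 - r) 0) => Hsr.
  have : (x + s) * (y + s) = 0.
    have -> : (x + s) * (y + s) = (x * y + s * (x + y) + r) + (s^+2 - r) by ring.
    by rewrite Eq1 Hsr addr0.
  move/eqP; rewrite mulf_eq0 => /orP[] /eqP H.
    have Hx' : x = - s by apply/eqP; rewrite -subr_eq0 opprK H.
    by rewrite Hx' eqxx in Hxs.
  have Hy' : y = - s by apply/eqP; rewrite -subr_eq0 opprK H.
  by rewrite Hy' eqxx in Hys.
have Hsig : x + y = sig0 by rewrite /sig0 -Eq3 mulfK.
have Hpi : x * y = pi0.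
  rewrite /pi0 -Hsig; apply/eqP; rewrite -subr_eq0; apply/eqP.
  by rewrite -[RHS]Eq1; ring.
have : (x - z0) * (x - (sig0 - z0)) = 0.
  have -> : (x - z0) * (x - (sig0 - z0)) = (x^+2 - sig0 * x + pi0) - (z0^+2 - sig0 * z0 + pi0)
    by ring.
  rewrite z0_root subr0 -Hsig -Hpi; ring.
move/eqP; rewrite mulf_eq0 !subr_eq0 => /orP[] H.
  by rewrite H in Hxz.
by rewrite H in Hxz'.
Qed.

Lemma psi_indep (a : 'rV[C]_4) : (forall o, dot (pt ps 4 o) a = 0) -> a = 0.
Proof.
move=> H.
have HN := H None; rewrite /dot sum4 !ptN cf4_0 cf4_1 cf4_2 cf4_3 in HN.
have Ha0 : a 0 i0 = 0 by move: HN; rewrite !mul0r !addr0 mul1r.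
have Hx : forall x, a 0 i1 * (x^+3 + q) + a 0 i2 * (x^+2 - r) + a 0 i3 * (x + s) = 0.
  move=> x; have := H (Some x); rewrite /dot sum4 !ev_some ev0 ev1 ev2 ev3 Ha0.
  by move=> <-; ring.
have h0 := Hx 0; have h1 := Hx 1; have hm := Hx (-1); have h2 := Hx 2.
have Ha2 : a 0 i2 = 0.
  have : 2 * a 0 i2 = (a 0 i1 * (1^+3 + q) + a 0 i2 * (1^+2 - r) + a 0 i3 * (1 + s))
    + (a 0 i1 * ((-1)^+3 + q) + a 0 i2 * ((-1)^+2 - r) + a 0 i3 * (-1 + s))
    - 2 * (a 0 i1 * (0^+3 + q) + a 0 i2 * (0^+2 - r) + a 0 i3 * (0 + s)) by ring.
  rewrite h0 h1 hm; move/eqP; rewrite mulr0 subr0 addr0 mulf_eq0 (negbTE two_nz) /=.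
  by move/eqP.
have Ha1 : a 0 i1 = 0.
  have : 6 * a 0 i1 = (a 0 i1 * (2^+3 + q) + a 0 i2 * (2^+2 - r) + a 0 i3 * (2 + s))
    - 2 * (a 0 i1 * (1^+3 + q) + a 0 i2 * (1^+2 - r) + a 0 i3 * (1 + s))
    + (a 0 i1 * (0^+3 + q) + a 0 i2 * (0^+2 - r) + a 0 i3 * (0 + s))
    - 2 * a 0 i2 by ring.
  rewrite h0 h1 h2 Ha2; move/eqP; rewrite !mulr0 !subr0 addr0 mulf_eq0 pnatr_eq0 /=.
  by move/eqP.
have Ha3 : a 0 i3 = 0.
  have : a 0 i3 = (a 0 i1 * (1^+3 + q) + a 0 i2 * (1^+2 - r) + a 0 i3 * (1 + s))
    - (a 0 i1 * (0^+3 + q) + a 0 i2 * (0^+2 - r) + a 0 i3 * (0 + s))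
    - a 0 i1 - a 0 i2 by ring.
  by rewrite h0 h1 Ha1 Ha2 !subr0.
apply/rowP; apply: ord4_ind; rewrite mxE //.
Qed.

End PC.


Section PD.
Variable C : numClosedFieldType.
Implicit Types P Q R : {poly C}.

Lemma coef_XsubC_mul x R i :
  (('X - x%:P) * R)`_i = (if i is j.+1 then R`_j else 0) - x * R`_i.
Proof. by rewrite mulrBl coefB coefXM coefCM; case: i. Qed.

Lemma sizeXM x R : R != 0 -> size (('X - x%:P) * R) = (size R).+1.
Proof. by move=> HR; rewrite size_mul ?polyXsubC_eq0 // size_XsubC. Qed.


Lemma factor3 P x0 x1 x2 : root P x0 -> root P x1 -> root P x2 ->
  x0 != x1 -> x0 != x2 -> x1 != x2 ->
  exists Q, P = ('X - x0%:P) * (('X - x1%:P) * (('X - x2%:P) * Q)).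
Proof.
move=> r0 r1 r2 h01 h02 h12.
have h10 : x1 != x0 by rewrite eq_sym.
have h20 : x2 != x0 by rewrite eq_sym.
have h21 : x2 != x1 by rewrite eq_sym.
have [P1 HP1] := factor_theorem P x0 r0.
have r1' : root P1 x1.
  move: r1; rewrite /root HP1 hornerM hornerXsubC mulf_eq0 subr_eq0 (negbTE h10).
  by rewrite orbF.
have [P2 HP2] := factor_theorem P1 x1 r1'.
have r2' : root P2 x2.
  move: r2; rewrite /root HP1 HP2 !hornerM !hornerXsubC !mulf_eq0 !subr_eq0.
  by rewrite (negbTE h20) (negbTE h21) !orbF.
have [P3 HP3] := factor_theorem P2 x2 r2'.
by exists P3; rewrite HP1 HP2 HP3; ring.
Qed.

Lemma setup P x0 x1 x2 : P != 0 -> (size P <= 5)%N ->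
  root P x0 -> root P x1 -> root P x2 ->
  x0 != x1 -> x0 != x2 -> x1 != x2 ->
  exists Q, [/\ P = ('X - x0%:P) * (('X - x1%:P) * (('X - x2%:P) * Q)),
     Q`_0 != 0 \/ Q`_1 != 0, Q`_2 = 0, Q`_3 = 0 & Q`_4 = 0 /\ (size Q <= 2)%N].
Proof.
move=> HP Hs r0 r1 r2 h01 h02 h12.
have [Q HQ] := factor3 r0 r1 r2 h01 h02 h12.
have HQ0 : Q != 0 by apply: contraNneq HP => h; rewrite HQ h !mulr0.
have HsQ : (size Q <= 2)%N.
  move: Hs; rewrite HQ sizeXM ?mulf_neq0 ?polyXsubC_eq0 // sizeXM ?mulf_neq0 ?polyXsubC_eq0 //.
  by rewrite sizeXM.
exists Q; split => //; try (split => //); try by apply: nth_default; apply: leq_trans HsQ _.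
case: (eqVneq Q`_0 0) => h0; last by left.
case: (eqVneq Q`_1 0) => h1; last by right.
case/negP: HQ0; apply/eqP/polyP => -[|[|j]]; rewrite coef0 //.
by apply: nth_default; apply: leq_trans HsQ _.
Qed.

Lemma key_node P x0 x1 x2 w : P != 0 -> (size P <= 5)%N -> P`_0 = P`_4 ->
  root P x0 -> root P x1 -> root P x2 ->
  x0 != x1 -> x0 != x2 -> x1 != x2 -> x0 * x1 * x2 != 0 ->
  w != x0 -> w != x1 -> w != x2 ->
  (P.[w] = 0 <-> x0 * x1 * x2 * w = 1).
Proof.
move=> HP Hs H04 r0 r1 r2 h01 h02 h12 hpi hw0 hw1 hw2.
have [Q [HQ Hnz Q2 Q3 [Q4 HsQ]]] := setup HP Hs r0 r1 r2 h01 h02 h12.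
have c0 : P`_0 = - (x0 * x1 * x2) * Q`_0 by rewrite HQ !coef_XsubC_mul /=; ring.
have c4 : P`_4 = Q`_1 by rewrite HQ !coef_XsubC_mul /= Q2 Q3 Q4; ring.
have ev : P.[w] = (w - x0) * (w - x1) * (w - x2) * (Q`_0 + Q`_1 * w).
  by rewrite HQ !hornerM !hornerXsubC (horner2 _ HsQ); ring.
have Hq1 : Q`_1 = - (x0 * x1 * x2) * Q`_0 by rewrite -c4 -H04.
have Hq0 : Q`_0 != 0.
  case: Hnz => // h; apply: contraNneq h => h0; by rewrite Hq1 h0 mulr0.
have Hf : (w - x0) * (w - x1) * (w - x2) != 0 by rewrite !mulf_neq0 // subr_eq0.
rewrite ev; split.
  move/eqP; rewrite mulf_eq0 (negbTE Hf) /= Hq1.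
  have -> : Q`_0 + - (x0 * x1 * x2) * Q`_0 * w = Q`_0 * (1 - x0 * x1 * x2 * w) by ring.
  by rewrite mulf_eq0 (negbTE Hq0) /= subr_eq0 eq_sym => /eqP.
move=> H; rewrite Hq1.
have -> : Q`_0 + - (x0 * x1 * x2) * Q`_0 * w = Q`_0 * (1 - x0 * x1 * x2 * w) by ring.
by rewrite H subrr !mulr0.
Qed.

Lemma key_cusp P x0 x1 x2 w : P != 0 -> (size P <= 5)%N -> P`_3 = 0 ->
  root P x0 -> root P x1 -> root P x2 ->
  x0 != x1 -> x0 != x2 -> x1 != x2 ->
  w != x0 -> w != x1 -> w != x2 ->
  (P.[w] = 0 <-> x0 + x1 + x2 + w = 0).
Proof.
move=> HP Hs H3 r0 r1 r2 h01 h02 h12 hw0 hw1 hw2.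
have [Q [HQ Hnz Q2 Q3 [Q4 HsQ]]] := setup HP Hs r0 r1 r2 h01 h02 h12.
have c3 : P`_3 = Q`_0 - (x0 + x1 + x2) * Q`_1 by rewrite HQ !coef_XsubC_mul /= Q2 Q3; ring.
have ev : P.[w] = (w - x0) * (w - x1) * (w - x2) * (Q`_0 + Q`_1 * w).
  by rewrite HQ !hornerM !hornerXsubC (horner2 _ HsQ); ring.
have Hq0 : Q`_0 = (x0 + x1 + x2) * Q`_1.
  by apply/eqP; rewrite -subr_eq0 -c3 H3.
have Hq1 : Q`_1 != 0.
  case: Hnz => // h; apply: contraNneq h => h1; by rewrite Hq0 h1 mulr0.
have Hf : (w - x0) * (w - x1) * (w - x2) != 0 by rewrite !mulf_neq0 // subr_eq0.
rewrite ev.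
have -> : Q`_0 + Q`_1 * w = Q`_1 * (x0 + x1 + x2 + w) by rewrite Hq0; ring.
split.
  by move/eqP; rewrite mulf_eq0 (negbTE Hf) /= mulf_eq0 (negbTE Hq1) /= => /eqP.
by move=> ->; rewrite !mulr0.
Qed.

End PD.


Section PE.
Variable C : numClosedFieldType.

Lemma nonimm (x y : 'rV[C]_4) : ~ (\rank (col_mx x y) = 2%N) -> x != 0 -> exists k, y = k *: x.
Proof.
move=> Hr Hx.
case: (boolP (y <= x)%MS) => Hyx.
  have [D ->] := submxP Hyx; exists (D 0 0).
  by rewrite {1}(mx11_scalar D) mul_scalar_mx.
exfalso; apply: Hr.
have Hlt : (x < x + y)%MS.
  rewrite ltmxE addsmxSl /=; apply: contra Hyx => H.
  exact: submx_trans (addsmxSr x y) H.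
have := rank_ltmx Hlt; rewrite rank_rV Hx addsmxE => H.
apply/eqP; rewrite eqn_leq H andbT.
exact: (rank_leq_row (col_mx x y)).
Qed.

Lemma dotZ (u a : 'rV[C]_4) k : dot (k *: u) a = k * dot u a.
Proof. by rewrite /dot mulr_sumr; apply: eq_bigr => j _; rewrite !mxE mulrA. Qed.

Lemma plane3 (u0 u1 u2 : 'rV[C]_4) : exists a : 'rV[C]_4, a != 0 /\
  [/\ dot u0 a = 0, dot u1 a = 0 & dot u2 a = 0].
Proof.
pose A := \matrix_(i < 4, j < 4) (if val i == 0%N then u0 else if val i == 1%N then u1 else u2) 0 j.
have HA : \det A^T = 0.
  rewrite det_tr; apply: (@determinant_alternate _ _ _ i2 i3) => // j.
  by rewrite !mxE.
have [a Ha HaA] := det0P (introT eqP HA).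
exists a; split => //.
have Hk : forall k : 'I_4, \sum_j A k j * a 0 j = 0.
  move=> k; move/matrixP: HaA => /(_ 0 k); rewrite !mxE => H; rewrite -[RHS]H.
  by apply: eq_bigr => j _; rewrite !mxE mulrC.
split.
- by rewrite -(Hk i0) /dot; apply: eq_bigr => j _; rewrite !mxE.
- by rewrite -(Hk i1) /dot; apply: eq_bigr => j _; rewrite !mxE.
- by rewrite -(Hk i2) /dot; apply: eq_bigr => j _; rewrite !mxE.
Qed.

Variables p q r s : C.
Hypothesis Hpqrs : r != s ^+ 2 \/ q != s ^+ 3 \/ p != s ^+ 4.
Notation ps := (psi p q r s).

Section WithG.
Variables a b c d : C.
Hypothesis Dnz : a * d - b * c != 0.
Definition gg : 'I_4 -> {poly C} := fun i => G a b c d (ps i).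

Lemma gg_sized : sized gg.
Proof. by move=> i; apply: G_size. Qed.

Lemma pt_gg o : pt gg 4 o = Erow ps (mob a b c d (pr o)).
Proof.
case: o => [x|]; apply/rowP => i; rewrite !mxE /gg /mob /=.
  by rewrite G_horner !mulr1.
by rewrite G_coef4 !mulr1 !mulr0 !addr0.
Qed.

Lemma pt_gg_k o : exists k, k != 0 /\ pt gg 4 o = k *: pt ps 4 (mm a b c d o).
Proof.
rewrite pt_gg; apply: Erow_unpr; first exact: psi_sized.
by apply: mob_nz; [exact: Dnz | exact: pr_nz].
Qed.

Lemma param_gg : parametrisation gg 4 ps 4.
Proof.
apply: (transfer (psi_wf Hpqrs) (psi_birat p q r s) gg_sized (mmK Dnz) (mmKi Dnz)).
exact: pt_gg_k.
Qed.

Definition Pa (v : 'rV[C]_4) : {poly C} := \sum_j v 0 j *: gg j.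

Lemma Pa_horner v x : (Pa v).[x] = dot (pt gg 4 (Some x)) v.
Proof.
rewrite /Pa horner_sum /dot; apply: eq_bigr => j _; by rewrite hornerZ !mxE mulrC.
Qed.

Lemma Pa_coef v k : (Pa v)`_k = \sum_j v 0 j * (gg j)`_k.
Proof. by rewrite /Pa coef_sum; apply: eq_bigr => j _; rewrite coefZ. Qed.

Lemma Pa_none v : (Pa v)`_4 = dot (pt gg 4 None) v.
Proof. by rewrite Pa_coef /dot; apply: eq_bigr => j _; rewrite !mxE mulrC. Qed.

Lemma Pa_size v : (size (Pa v) <= 5)%N.
Proof.
apply/leq_sizeP => k Hk; rewrite Pa_coef big1 // => j _.
by rewrite (leq_sizeP _ _ (gg_sized j)) ?mulr0.
Qed.

Lemma Pa_nz v : v != 0 -> Pa v != 0.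
Proof.
move=> Hv; apply: contraNneq Hv => H0.
have Hg : forall o, dot (pt gg 4 o) v = 0.
  case=> [x|]; first by rewrite -Pa_horner H0 horner0.
  by rewrite -Pa_none H0 coef0.
apply/eqP; apply: (psi_indep (p:=p) (q:=q) (r:=r) (s:=s)) => o.
have [k [Hk E]] := pt_gg_k (mmi a b c d o).
have := Hg (mmi a b c d o); rewrite E mmKi // dotZ => /eqP.
by rewrite mulf_eq0 (negbTE Hk) /= => /eqP.
Qed.

Lemma coplanar_gg (tt : 'I_4 -> C) :
  coplanar (fun i => pt gg 4 (Some (tt i))) <->
  exists v, v != 0 /\ forall i, (Pa v).[tt i] = 0.
Proof.
split.
  move=> [v [Hv Hi]]; exists v; split => // i.
  by rewrite Pa_horner; apply/dotE; apply: Hi.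
move=> [v [Hv Hi]]; exists v; split => // i.
by apply/dotE; rewrite -Pa_horner; apply: Hi.
Qed.

End WithG.

Lemma pe_inv (v u : 'rV[C]_4) : proj_eq v u -> proj_eq u v.
Proof.
move=> [Hu [c [Hc ->]]]; split; first by rewrite scaler_eq0 negb_or Hc.
exists c^-1; split; first by rewrite invr_eq0.
by rewrite scalerA mulVf // scale1r.
Qed.

Lemma node_case v : is_node ps 4 v ->
     exists (g : 'I_4 -> {poly C}) (e : nat),
       [/\ parametrisation g e ps 4,
           proj_eq (pt g e (Some 0)) v,
           proj_eq (pt g e None) v &
           forall tt : 'I_4 -> C,
             (forall i j, i != j -> ~ proj_eq (pt g e (Some (tt i))) (pt g e (Some (tt j)))) ->
             (forall i, ~ proj_eq (pt g e (Some (tt i))) v) ->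
             (coplanar (fun i => pt g e (Some (tt i))) <-> \prod_(i < 4) tt i = 1)].
Proof.
move=> [t [u [Htu [Hvt [Hvu _]]]]].
have [Hpt [c1 [Hc1 E1]]] := Hvt; have [Hpu [c2 [Hc2 E2]]] := Hvu.
pose ka := c2 / c1.
have Hka : ka != 0 by rewrite mulf_neq0 // invr_eq0.
have Etu : pt ps 4 t = ka *: pt ps 4 u.
  have -> : pt ps 4 t = c1^-1 *: (c1 *: pt ps 4 t) by rewrite scalerA mulVf // scale1r.
  by rewrite -E1 E2 scalerA mulrC.
pose la := 4.-root ka.
have Hla4 : la ^+ 4 = ka by rewrite /la rootCK.
have Hla : la != 0 by apply: contraNneq Hka => h; rewrite -Hla4 h expr0n.
pose a := la * (pr u).1; pose c := la * (pr u).2; pose b := (pr t).1; pose d := (pr t).2.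
have Dnz : a * d - b * c != 0.
  have -> : a * d - b * c = la * ((pr u).1 * (pr t).2 - (pr t).1 * (pr u).2) by rewrite /a /b /c /d; ring.
  rewrite mulf_neq0 //.
  case: t u Htu {Hvt Hvu E1 E2 Etu Hpt Hpu a b c d} => [x|] [y|] //= Hxy.
  - rewrite !mulr1 subr_eq0; apply/eqP => h; apply: Hxy; by rewrite h.
  - by rewrite mulr1 mulr0 subr0 oner_neq0.
  - by rewrite mulr0 mulr1 sub0r oppr_eq0 oner_neq0.
have Hwf := param_gg Dnz; have [[_ Hnz] _] := Hwf.
have E0 : pt (gg a b c d) 4 (Some 0) = pt ps 4 t.
  rewrite pt_gg pt_Erow; last exact: psi_sized.
  by apply/rowP => i; rewrite !mxE /mob /= !mulr0 !mulr1 !add0r.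
have EN : pt (gg a b c d) 4 None = pt ps 4 t.
  rewrite pt_gg Etu pt_Erow; last exact: psi_sized.
  rewrite -Hla4 -Erow_sc; apply/rowP => i; rewrite !mxE /mob /sc /=.
  by rewrite !mulr0 !mulr1 !addr0.
have Htv : proj_eq (pt ps 4 t) v by apply: pe_inv.
exists (gg a b c d), 4%N; split => //; first by rewrite E0.
  by rewrite EN.
move=> tt Hd Hv.
have Hneq : forall i j, i != j -> tt i != tt j.
  move=> i j Hij; apply/negP => /eqP Heq; apply: (Hd i j Hij).
  by rewrite Heq; apply: pe_refl.
have Hn0 : forall i, tt i != 0.
  move=> i; apply/negP => /eqP Heq; apply: (Hv i); by rewrite Heq E0.
have P04 : forall w, (Pa a b c d w)`_0 = (Pa a b c d w)`_4.
  move=> w; rewrite Pa_none Pa_coef EN -E0 /dot; apply: eq_bigr => j _.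
  by rewrite !mxE -horner_coef0 mulrC.
have Hpi : tt i0 * tt i1 * tt i2 != 0 by rewrite !mulf_neq0.
have H01 : tt i0 != tt i1 by apply: Hneq.
have H02 : tt i0 != tt i2 by apply: Hneq.
have H12 : tt i1 != tt i2 by apply: Hneq.
have H30 : tt i3 != tt i0 by apply: Hneq.
have H31 : tt i3 != tt i1 by apply: Hneq.
have H32 : tt i3 != tt i2 by apply: Hneq.
rewrite coplanar_gg prod4; split.
  move=> [w [Hw Hi]].
  have := Pa_nz Dnz Hw; move=> Hnzw.
  have Hr : forall i, root (Pa a b c d w) (tt i) by move=> i; apply/eqP.
  by apply/(key_node Hnzw (Pa_size _ _ _ _ _) (P04 w) (Hr i0) (Hr i1) (Hr i2)
     H01 H02 H12 Hpi H30 H31 H32); apply: Hi.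
move=> Hprod.
have [w [Hw [h0 h1 h2]]] := plane3 (pt (gg a b c d) 4 (Some (tt i0)))
   (pt (gg a b c d) 4 (Some (tt i1))) (pt (gg a b c d) 4 (Some (tt i2))).
have Hnzw := Pa_nz Dnz Hw.
have Hr : forall i, i != i3 -> root (Pa a b c d w) (tt i).
  move=> i; apply: (@ord4_ind (fun i => i != i3 -> root (Pa a b c d w) (tt i))) => // _;
  by rewrite /root Pa_horner ?h0 ?h1 ?h2.
exists w; split => //; apply: ord4_ind; try by apply/eqP; apply: Hr.
by apply/(key_node Hnzw (Pa_size _ _ _ _ _) (P04 w) (Hr i0 isT) (Hr i1 isT) (Hr i2 isT)
     H01 H02 H12 Hpi H30 H31 H32).
Qed.

Lemma cusp_case v : is_cusp ps 4 v ->
     exists (g : 'I_4 -> {poly C}) (e : nat),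
       [/\ parametrisation g e ps 4,
           proj_eq (pt g e None) v &
           forall tt : 'I_4 -> C,
             (forall i j, i != j -> ~ proj_eq (pt g e (Some (tt i))) (pt g e (Some (tt j)))) ->
             (forall i, ~ proj_eq (pt g e (Some (tt i))) v) ->
             (coplanar (fun i => pt g e (Some (tt i))) <-> \sum_(i < 4) tt i = 0)].
Proof.
move=> [t [Hvt [_ Hni]]].
have [Hpt [c1 [Hc1 E1]]] := Hvt.
have [ka Hka] := nonimm Hni Hpt.
case: t Hvt Hpt E1 Hka Hni => [x0|]; last first.
  move=> _ _ _ /rowP /(_ i1); rewrite !mxE /= -/(ps i1) -/(ps i1) cf3_1 cf4_1 mulr0.
  by move/eqP; rewrite oner_eq0.
move=> Hvt Hpt E1 Hka _.
have Hder : forall j, ((ps j)^`()).[x0] = ka * (ps j).[x0].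
  by move=> j; move/rowP: Hka => /(_ j); rewrite !mxE.
have Dnz : x0 * (- ka / 4) - (x0 * (- ka / 4) + 1) * 1 != 0.
  have -> : x0 * (- ka / 4) - (x0 * (- ka / 4) + 1) * 1 = -1 by ring.
  by rewrite oppr_eq0 oner_neq0.
set g := gg x0 (x0 * (- ka / 4) + 1) 1 (- ka / 4).
have Hwf := param_gg Dnz.
have EN : pt g 4 None = pt ps 4 (Some x0).
  rewrite /g pt_gg pt_Erow; last exact: psi_sized.
  by apply/rowP => i; rewrite !mxE /mob /= !mulr0 !mulr1 !addr0.
have H3 : forall j, (g j)`_3 = 0.
  move=> j; rewrite /g /gg G_coef3.
  have h := Hder j; rewrite (hornerD5 _ (psi_sized _ _ _ _ j)) (horner5 _ (psi_sized _ _ _ _ j)) in h.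
  set f0 := (ps j)`_0 in h *; set f1 := (ps j)`_1 in h *; set f2 := (ps j)`_2 in h *;
  set f3 := (ps j)`_3 in h *; set f4 := (ps j)`_4 in h *.
  have H4 := four_nz C.
  have -> : f0 * (4 * 1 ^+ 3 * (- ka / 4)) +
    f1 * ((x0 * (- ka / 4) + 1) * 1 ^+ 3 + 3 * x0 * 1 ^+ 2 * (- ka / 4)) +
    f2 * (2 * x0 * (x0 * (- ka / 4) + 1) * 1 ^+ 2 + 2 * x0 ^+ 2 * 1 * (- ka / 4)) +
    f3 * (3 * x0 ^+ 2 * (x0 * (- ka / 4) + 1) * 1 + x0 ^+ 3 * (- ka / 4)) +
    f4 * (4 * x0 ^+ 3 * (x0 * (- ka / 4) + 1)) =
    (f1 + 2 * f2 * x0 + 3 * f3 * x0 ^+ 2 + 4 * f4 * x0 ^+ 3)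
    - ka * (f0 + f1 * x0 + f2 * x0 ^+ 2 + f3 * x0 ^+ 3 + f4 * x0 ^+ 4) by field.
  by rewrite h subrr.
have Htv : proj_eq (pt ps 4 (Some x0)) v by apply: pe_inv.
exists g, 4%N; split => //; first by rewrite EN.
move=> tt Hd Hv.
have [[_ Hnz] _] := Hwf.
have Hneq : forall i j, i != j -> tt i != tt j.
  move=> i j Hij; apply/negP => /eqP Heq; apply: (Hd i j Hij).
  by rewrite Heq; apply: pe_refl.
have P3 : forall w, (Pa x0 (x0 * (- ka / 4) + 1) 1 (- ka / 4) w)`_3 = 0.
  by move=> w; rewrite Pa_coef big1 // => j _; rewrite -/g H3 mulr0.
have H01 : tt i0 != tt i1 by apply: Hneq.
have H02 : tt i0 != tt i2 by apply: Hneq.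
have H12 : tt i1 != tt i2 by apply: Hneq.
have H30 : tt i3 != tt i0 by apply: Hneq.
have H31 : tt i3 != tt i1 by apply: Hneq.
have H32 : tt i3 != tt i2 by apply: Hneq.
rewrite /g coplanar_gg sum4; split.
  move=> [w [Hw Hi]].
  have Hnzw := Pa_nz Dnz Hw.
  have Hr : forall i, root (Pa x0 (x0 * (- ka / 4) + 1) 1 (- ka / 4) w) (tt i)
    by move=> i; apply/eqP.
  by apply/(key_cusp Hnzw (Pa_size _ _ _ _ _) (P3 w) (Hr i0) (Hr i1) (Hr i2)
     H01 H02 H12 H30 H31 H32); apply: Hi.
move=> Hsum.
have [w [Hw [h0 h1 h2]]] := plane3 (pt g 4 (Some (tt i0)))
   (pt g 4 (Some (tt i1))) (pt g 4 (Some (tt i2))).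
have Hnzw := Pa_nz Dnz Hw.
have Hr : forall i, i != i3 -> root (Pa x0 (x0 * (- ka / 4) + 1) 1 (- ka / 4) w) (tt i).
  move=> i; apply: (@ord4_ind (fun i => i != i3 -> root (Pa x0 (x0 * (- ka / 4) + 1) 1 (- ka / 4) w) (tt i))) => // _;
  by rewrite /root Pa_horner -/g ?h0 ?h1 ?h2.
exists w; split => //; apply: ord4_ind; try by apply/eqP; apply: Hr.
by apply/(key_cusp Hnzw (Pa_size _ _ _ _ _) (P3 w) (Hr i0 isT) (Hr i1 isT) (Hr i2 isT)
     H01 H02 H12 H30 H31 H32).
Qed.

End PE.

End Aux.
Import Aux.

Theorem lemma5p2 (R : realType) (p q r s : R[i]) :
  (r != s ^+ 2 \/ q != s ^+ 3 \/ p != s ^+ 4) ->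
  first_species (curve (psi p q r s) 4) ->
  (forall v : 'rV[R[i]]_4, is_node (psi p q r s) 4 v ->
     exists (g : 'I_4 -> {poly R[i]}) (e : nat),
       [/\ parametrisation g e (psi p q r s) 4,
           proj_eq (pt g e (Some 0)) v,
           proj_eq (pt g e None) v &
           forall tt : 'I_4 -> R[i],
             (forall i j, i != j -> ~ proj_eq (pt g e (Some (tt i))) (pt g e (Some (tt j)))) ->
             (forall i, ~ proj_eq (pt g e (Some (tt i))) v) ->
             (coplanar (fun i => pt g e (Some (tt i))) <-> \prod_(i < 4) tt i = 1)])
  /\
  (forall v : 'rV[R[i]]_4, is_cusp (psi p q r s) 4 v ->
     exists (g : 'I_4 -> {poly R[i]}) (e : nat),
       [/\ parametrisation g e (psi p q r s) 4,
           proj_eq (pt g e None) v &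
           forall tt : 'I_4 -> R[i],
             (forall i j, i != j -> ~ proj_eq (pt g e (Some (tt i))) (pt g e (Some (tt j)))) ->
             (forall i, ~ proj_eq (pt g e (Some (tt i))) v) ->
             (coplanar (fun i => pt g e (Some (tt i))) <-> \sum_(i < 4) tt i = 0)]).
Proof.
move=> H _; split => v Hv.
  exact: (node_case H Hv).
exact: (cusp_case H Hv).
Qed.
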